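(* Let $n\ge2$ and $W_n=(w_{ij},\ 1\le j<i\le n)$ with $w_{ij}>0$. Then for $1\le j\le n-1$, $$\tau^n_j(T^\triangle_n(W_n))=\prod_{\ell=1}^{j-1}w_{j\ell}\prod_{k=j+1}^nw_{kj}.$$
   Context: Triangular arrays are $X=(x_{ij},\ 1\le j<i\le n)$ of positive reals. Their type is $\tau^n_j(X)=D_{nj}(X)/D_{n,j-1}(X)$ where $D_{n0}(X)=1$ and $D_{nj}(X)=x_{nj}x_{n-1,j-1}\cdots x_{n-j+1,1}$ for $1\le j\le n-1$. Local maps: for $i\ge3$, $l_{i1}$ replaces $x_{i1}$ by $x_{i-1,1}x_{i1}$; for $2\le j$ with $j+1<i$, $l_{ij}$ replaces $(x_{i-1,j-1},x_{i-1,j},x_{i,j-1},x_{ij})=(a,b,c,d)$ by $(bc/(ab+ac),b,c,d(b+c))$, other entries unchanged. For $1\le j\le n-2$, $\rho^{\triangle,n}_j=l_{n-j+1,1}\circ l_{n-j+2,2}\circ\cdots\circ l_{n-1,j-1}\circ l_{nj}$. $r^\triangle_{n,n-1}$ replaces $x_{n,n-1}$ by $1/x_{n,n-1}$. With conventions $x_{i0}=1$, $x_{n+1,n-1}=1$: for $k=0,\dots,\lfloor n/2\rfloor-1$, $b^{\triangle,n}_{n-2k,n-2k-1}$ replaces $x_{n-2k,n-2k-1}$ by $x_{n-2k+1,n-2k-1}x_{n-2k,n-2k-2}/x_{n-2k,n-2k-1}$; for $k=1,\dots,\lfloor(n-1)/2\rfloor$, $b^{\triangle,n}_{n-2k+1,n-2k}$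 is the identity. $\rho^{\triangle,n}_{n-1}=b^{\triangle,n}_{2,1}\circ\cdots\circ b^{\triangle,n}_{n,n-1}\circ r^\triangle_{n,n-1}$, $R^\triangle_n=\rho^{\triangle,n}_{n-1}\circ\cdots\circ\rho^{\triangle,n}_1$. $T^\triangle_2(x_{21})=x_{21}$ and for $n\ge3$, $T^\triangle_n(X_n)=R^\triangle_n$ applied to the array whose first $n-1$ rows are $T^\triangle_{n-1}(x_{ij},\ 1\le j<i\le n-1)$ and whose last row is $(x_{n1},\dots,x_{n,n-1})$. *)

(* Defs.v *)
(* Triangular arrays X = (x_ij, 1 <= j < i <= n) are encoded
   as functions nat -> nat -> R; only entries with 1 <= j < i <= n matter. *)
From mathcomp Require Import all_boot all_order all_algebra.
Set Implicit Arguments. Unset Strict Implicit. Unset Printing Implicit Defensive.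
Import Order.TTheory GRing.Theory Num.Theory.
Local Open Scope ring_scope.

Section Tri.
Variable R : realFieldType.

Definition tarray := nat -> nat -> R.

Definition upd (X : tarray) (i j : nat) (v : R) : tarray :=
  fun a b => if (a == i) && (b == j) then v else X a b.

Definition Dnj (n j : nat) (X : tarray) : R :=
  \prod_(m < j) X (n - m)%N (j - m)%N.

Definition tau (n j : nat) (X : tarray) : R := Dnj n j X / Dnj n j.-1 X.

Definition lmap (i j : nat) (X : tarray) : tarray :=
  if j == 1%N then upd X i 1 (X i.-1 1%N * X i 1%N)
  else
    let a := X i.-1 j.-1 in let b := X i.-1 j in
    let c := X i j.-1 in let d := X i j in
    upd (upd X i.-1 j.-1 (b * c / (a * b + a * c))) i j (d * (b + c)).

Fixpoint rho_rec (i j : nat) (X : tarray) : tarray :=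
  match j with
  | 0 => X
  | j'.+1 => rho_rec i.-1 j' (lmap i j X)
  end.

Definition rho (n j : nat) (X : tarray) : tarray := rho_rec n j X.

Definition rmap (n : nat) (X : tarray) : tarray :=
  upd X n n.-1 (X n n.-1)^-1.

Definition getc (n : nat) (X : tarray) (i j : nat) : R :=
  if j == 0%N then 1
  else if (i == n.+1) && (j == n.-1) then 1 else X i j.

Definition bmap (n i : nat) (X : tarray) : tarray :=
  if odd (n - i) then X
  else upd X i i.-1 (getc n X i.+1 i.-1 * getc n X i (i - 2) / X i i.-1).

(* rho^{triangle,n}_{n-1} = b_{2,1} o ... o b_{n,n-1} o r_{n,n-1} *)
Definition rho_last (n : nat) (X : tarray) : tarray :=
  foldl (fun Y i => bmap n i Y) (rmap n X) (rev (iota 2 n.-1)).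

Definition Rmap (n : nat) (X : tarray) : tarray :=
  rho_last n (foldl (fun Y j => rho n j Y) X (iota 1 (n - 2))).

Fixpoint Tmap (n : nat) (W : tarray) : tarray :=
  match n with
  | 0 | 1 | 2 => W
  | n'.+1 =>
      let P := Tmap n' W in
      Rmap n (fun i j => if (i < n)%N then P i j else W i j)
  end.

End Tri.

(* Main.v *)
Require Import Defs.
From mathcomp Require Import all_boot all_order all_algebra.
From mathcomp Require Import ring lra zify.
Set Implicit Arguments. Unset Strict Implicit. Unset Printing Implicit Defensive.
Import Order.TTheory GRing.Theory Num.Theory.
Local Open Scope ring_scope.


Definition posR (R : realFieldType) (N : nat) (X : tarray R) :=
  forall a b : nat, (0 < b)%N -> (b < a)%N -> (a <= N)%N -> 0 < X a b.

Lemma Dnj0 (R : realFieldType) n (X : tarray R) : Dnj n 0 X = 1.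
Proof. by rewrite /Dnj big_ord0. Qed.

Lemma DnjS (R : realFieldType) n j (X : tarray R) :
  Dnj n j.+1 X = X n j.+1 * Dnj n.-1 j X.
Proof.
rewrite /Dnj big_ord_recl /= !subn0; congr (_ * _).
apply: eq_bigr => i _; rewrite /bump /=; congr (X _ _); lia.
Qed.

Lemma Dnj_frame (R : realFieldType) n j (X Y : tarray R) : (j <= n)%N ->
  (forall b, (0 < b)%N -> (b <= j)%N -> X (b + (n - j))%N b = Y (b + (n - j))%N b) ->
  Dnj n j X = Dnj n j Y.
Proof.
move=> jn H; apply: eq_bigr => [[m /= Hm]] _.
have -> : (n - m = (j - m) + (n - j))%N by lia.
apply: H; lia.
Qed.

Lemma Dnj_pos (R : realFieldType) N n j (X : tarray R) : posR N X ->
  (j < n)%N -> (n <= N)%N -> 0 < Dnj n j X.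
Proof.
move=> HX jn nN; apply: prodr_gt0 => [[m /= Hm]] _; apply: HX; lia.
Qed.

Lemma lmap_frame (R : realFieldType) i k (Y : tarray R) a b :
  (0 < k)%N -> ~ (a = i /\ b = k) -> ~ ((1 < k)%N /\ a = i.-1 /\ b = k.-1) ->
  lmap i k Y a b = Y a b.
Proof.
move=> k0 H1 H2; rewrite /lmap; case: ifP => [/eqP k1|/negbT k1]; rewrite /upd.
  by case: (a =P i) => [ai|//]; case: (b =P 1%N) => [b1|//]; exfalso; apply: H1; subst.
case: (a =P i) => [ai|_]; case: (b =P k) => [bk|_] //=; first by exfalso; apply: H1.
all: case: (a =P i.-1) => [ai'|//]; case: (b =P k.-1) => [bk'|//]; exfalso; apply: H2; split=> //; lia.
Qed.

Lemma rho_frame (R : realFieldType) i j (Y : tarray R) a b : (j <= i)%N ->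
  ~ ((0 < b)%N /\ (b <= j)%N /\ a = (b + (i - j))%N) -> rho_rec i j Y a b = Y a b.
Proof.
elim: j i Y => [//|j IH] i Y ji H /=.
rewrite IH; [|lia|lia].
apply: lmap_frame => //; lia.
Qed.

Lemma lmap_pos (R : realFieldType) N i k (Y : tarray R) : posR N Y ->
  (k.+1 < i)%N -> (i <= N)%N -> (0 < k)%N -> posR N (lmap i k Y).
Proof.
move=> HY ki iN k0 a b b0 ba aN; rewrite /lmap; case: ifP => [/eqP k1|k1]; rewrite /upd.
  case: ifP => _; last exact: HY.
  apply: mulr_gt0; apply: HY; lia.
move/negbT: k1 => k1.
have pa : 0 < Y i.-1 k.-1 by apply: HY; lia.
have pb : 0 < Y i.-1 k by apply: HY; lia.
have pc : 0 < Y i k.-1 by apply: HY; lia.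
have pd : 0 < Y i k by apply: HY; lia.
case: ifP => _; first by apply: mulr_gt0 => //; apply: addr_gt0.
case: ifP => _; last exact: HY.
apply: divr_gt0; first exact: mulr_gt0.
by apply: addr_gt0; apply: mulr_gt0.
Qed.

Lemma rho_pos (R : realFieldType) N i j (Y : tarray R) : posR N Y ->
  (j.+1 < i)%N -> (i <= N)%N -> posR N (rho_rec i j Y).
Proof.
elim: j i Y => [//|j IH] i Y HY ji iN /=.
apply: IH; [apply: lmap_pos => //|lia|lia].
Qed.

Lemma rho_D (R : realFieldType) N i j (Y : tarray R) : posR N Y ->
  (j.+1 < i)%N -> (i <= N)%N -> (0 < j)%N ->
  Dnj i j (rho_rec i j Y) * Dnj i j Y = Y i j ^+ 2 * Dnj i.-1 j Y * Dnj i j.-1 Y.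
Proof.
elim: j i Y => [//|j IH] i Y HY ji iN _.
case: j IH ji => [|j] IH ji.
  rewrite /= !DnjS !Dnj0 /lmap /upd /= !eqxx /=; ring.
set L := lmap i j.+2 Y.
have -> : rho_rec i j.+2 Y = rho_rec i.-1 j.+1 L by [].
have posL : posR N L by apply: lmap_pos.
have IH' := IH i.-1 L posL ltac:(lia) ltac:(lia) isT.
have fr : forall n' j', (j' <= n')%N -> (n' - j' != i - j.+2)%N || (j' <= j)%N ->
    Dnj n' j' L = Dnj n' j' Y.
  move=> n' j' jn' H; apply: Dnj_frame => // b b0 bj.
  apply: lmap_frame => //; move: H; case: eqP => //= H1 H2; lia.
have Li : L i j.+2 = Y i j.+2 * (Y i.-1 j.+2 + Y i j.+1) by rewrite /L /lmap /upd /= !eqxx.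
have La : L i.-1 j.+1 = Y i.-1 j.+2 * Y i j.+1 /
   (Y i.-1 j.+1 * Y i.-1 j.+2 + Y i.-1 j.+1 * Y i j.+1).
  rewrite /L /lmap /upd /= !eqxx /=.
  by case: (i.-1 =P i) => [?|] //=; lia.
have rhoi : rho_rec i.-1 j.+1 L i j.+2 = L i j.+2.
  apply: rho_frame; lia.
rewrite [Dnj i j.+2 (rho_rec _ _ _)]DnjS rhoi Li.
rewrite [Dnj i.-1 j.+1 L]DnjS La in IH'.
rewrite (fr i.-1.-1 j) ?(fr i.-1.-1 j.+1) ?(fr i.-1 j) in IH'; try (apply/orP; lia); try lia.
move: IH'; set P := Dnj i.-1 j.+1 _ => IH'.
rewrite [Dnj i j.+2 Y]DnjS [Dnj i.-1 j.+1 Y]DnjS [Dnj i.-1 j.+2 Y]DnjS [Dnj i j.+1 Y]DnjS /=.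
have pA : 0 < Dnj i.-1.-1 j Y by apply: (Dnj_pos HY); lia.
have pB : 0 < Dnj i.-1.-1 j.+1 Y by apply: (Dnj_pos HY); lia.
have pC : 0 < Dnj i.-1 j Y by apply: (Dnj_pos HY); lia.
have pa : 0 < Y i.-1 j.+1 by apply: HY; lia.
have pb : 0 < Y i.-1 j.+2 by apply: HY; lia.
have pc : 0 < Y i j.+1 by apply: HY; lia.
set A := Dnj i.-1.-1 j Y in IH' pA *.
set B := Dnj i.-1.-1 j.+1 Y in IH' pB *.
set C := Dnj i.-1 j Y in IH' pC *.
set a := Y i.-1 j.+1 in IH' pa *.
set b := Y i.-1 j.+2 in IH' pb *.
set c := Y i j.+1 in IH' pc *.
set d := Y i j.+2.
have a0 : a != 0 by rewrite gt_eqF.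
have b0 : b != 0 by rewrite gt_eqF.
have c0 : c != 0 by rewrite gt_eqF.
have A0 : A != 0 by rewrite gt_eqF.
have bc0 : b + c != 0 by rewrite gt_eqF // addr_gt0.
have ab0 : a * b + a * c != 0 by rewrite gt_eqF // addr_gt0 // mulr_gt0.
have a'0 : b * c / (a * b + a * c) != 0.
  by rewrite mulf_neq0 ?invr_eq0 // mulf_neq0.
have HP : P = (b * c / (a * b + a * c)) ^+ 2 * B * C / (b * c / (a * b + a * c) * A).
  by rewrite -IH' mulfK // mulf_neq0.
rewrite HP; field.
by rewrite ab0 A0 c0 b0.
Qed.

Definition Zf (R : realFieldType) n (X : tarray R) k :=
  foldl (fun Y j => rho n j Y) X (iota 1 k).

Lemma Zf_S (R : realFieldType) n (X : tarray R) k : Zf n X k.+1 = rho n k.+1 (Zf n X k).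
Proof.
rewrite /Zf; have -> : iota 1 k.+1 = iota 1 k ++ [:: k.+1] by rewrite -(addn1 k) iotaD add1n addn1.
by rewrite foldl_cat.
Qed.

Lemma Zf_frame (R : realFieldType) n (X : tarray R) k : (k <= n)%N ->
  forall a b, (a - b < n - k)%N -> Zf n X k a b = X a b.
Proof.
elim: k => [//|k IH] kn a b H.
rewrite Zf_S /rho rho_frame; [|lia|lia].
apply: IH; lia.
Qed.

Lemma Zf_pos (R : realFieldType) n (X : tarray R) k : posR n X -> (k.+2 <= n)%N ->
  posR n (Zf n X k).
Proof.
move=> HX; elim: k => [//|k IH] kn.
rewrite Zf_S /rho; apply: rho_pos; [apply: IH; lia | lia | by []].
Qed.

Lemma Zf_D (R : realFieldType) n (X : tarray R) k : posR n X -> (k.+2 <= n)%N ->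
  forall j, (j <= k)%N ->
  Dnj n j (Zf n X k) = (\prod_(1 <= l < j.+1) X n l) * Dnj n.-1 j X.
Proof.
move=> HX; elim: k => [|k IH] kn j jk.
  have -> : j = 0%N by lia.
  by rewrite !Dnj0 big_geq ?mulr1.
have IHk := IH ltac:(lia).
set Zk := Zf n X k.
have posZ : posR n Zk by apply: Zf_pos => //; lia.
case: (ltnP j k.+1) => Hj.
  rewrite -IHk; last lia.
  rewrite Zf_S /rho; apply: Dnj_frame; first lia.
  move=> b b0 bj; apply: rho_frame; lia.
have -> : j = k.+1 by lia.
have H := rho_D posZ (i:=n) (j:=k.+1) ltac:(lia) (leqnn n) isT.
rewrite Zf_S /rho -/Zk.
have frZ : forall n' j', (j' <= n')%N -> (n' - j' < n - k)%N -> Dnj n' j' Zk = Dnj n' j' X.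
  move=> n' j' jn' H'; apply: Dnj_frame => // b b0 bj; apply: Zf_frame; lia.
rewrite (frZ n k.+1) ?(frZ n.-1 k.+1) ?IHk in H; try lia.
rewrite /Zk (@Zf_frame _ n X k) in H; try lia.
rewrite [Dnj n k.+1 X]DnjS in H.
rewrite big_nat_recr //.
have pE : 0 < Dnj n.-1 k X by apply: (Dnj_pos HX); lia.
have px : 0 < X n k.+1 by apply: HX; lia.
move: H; set D' := Dnj n k.+1 _; set x := X n k.+1; set E := Dnj n.-1 k X;
  set F := Dnj n.-1 k.+1 X; set P := \prod_(1 <= l < k.+1) X n l => H.
have x0 : x != 0 by rewrite gt_eqF.
have E0 : E != 0 by rewrite gt_eqF.
have -> : D' = x ^+ 2 * F * (P * E) / (x * E) by rewrite -H mulfK // mulf_neq0.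
rewrite /=; field; by rewrite x0 E0.
Qed.

Definition bv (R : realFieldType) n (Y : tarray R) i :=
  if odd (n - i)%N then Y i i.-1
  else getc n Y i.+1 i.-1 * getc n Y i (i - 2)%N / Y i i.-1.

Lemma bmap_eq (R : realFieldType) n i (Y : tarray R) a b :
  bmap n i Y a b = if (a == i) && (b == i.-1) then bv n Y i else Y a b.
Proof.
rewrite /bmap /bv; case: ifP => _ //; rewrite /upd //.
by case: (a =P i) => [->|] //; case: (b =P i.-1) => [->|].
Qed.

Lemma bv_frame (R : realFieldType) n (Y1 Y0 : tarray R) a :
  Y1 a a.-1 = Y0 a a.-1 -> Y1 a.+1 a.-1 = Y0 a.+1 a.-1 -> Y1 a (a - 2)%N = Y0 a (a - 2)%N ->
  bv n Y1 a = bv n Y0 a.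
Proof. by move=> h1 h2 h3; rewrite /bv /getc h1 h2 h3. Qed.

Lemma bfold (R : realFieldType) n (s : seq nat) : uniq s -> all (leq 2) s ->
  forall (Y0 : tarray R) a b,
  foldl (fun Y i => bmap n i Y) Y0 s a b =
  if (a \in s) && (b == a.-1) then bv n Y0 a else Y0 a b.
Proof.
elim: s => [|i s IH] //= /andP[ni us] /andP[i2 s2] Y0 a b.
rewrite IH // bmap_eq in_cons.
case: (a =P i) => [->|ai] /=.
  by rewrite (negbTE ni).
case ha: (a \in s) => //=.
case: (b =P a.-1) => [_|] //=.
have a2 : (2 <= a)%N by move/allP: s2 => /(_ a ha).
apply: bv_frame; rewrite bmap_eq.
- by rewrite (introF eqP ai).
- by case: (a.+1 =P i) => [?|] //=; case: eqP => //; lia.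
- by rewrite (introF eqP ai).
Qed.

Lemma rho_last_eq (R : realFieldType) n (Z : tarray R) a b : (2 <= n)%N ->
  rho_last n Z a b =
  if [&& (2 <= a)%N, (a <= n)%N & b == a.-1] then bv n (rmap n Z) a else rmap n Z a b.
Proof.
move=> n2; rewrite /rho_last bfold ?rev_uniq ?iota_uniq //; last first.
  by rewrite all_rev; apply/allP => x; rewrite mem_iota => /andP[].
rewrite mem_rev mem_iota.
have -> : (2 + n.-1 = n.+1)%N by lia.
by rewrite ltnS andbA.
Qed.

Lemma getc_pos (R : realFieldType) n (Y : tarray R) i j : posR n Y ->
  (j == 0%N) || ((i == n.+1) && (j == n.-1)) || [&& (0 < j)%N, (j < i)%N & (i <= n)%N] ->
  0 < getc n Y i j.
Proof.
move=> HY H; rewrite /getc; case: ifP => // j0; case: ifP => // h.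
move: H; rewrite j0 h /= => /and3P[*]; exact: HY.
Qed.

Lemma rmap_pos (R : realFieldType) n (Z : tarray R) : (2 <= n)%N -> posR n Z -> posR n (rmap n Z).
Proof.
move=> n2 HZ a b b0 ba an; rewrite /rmap /upd; case: ifP => [_|_].
  by rewrite invr_gt0; apply: HZ; lia.
exact: HZ.
Qed.

Lemma bv_pos (R : realFieldType) n (Y : tarray R) a : (2 <= n)%N -> posR n Y ->
  (2 <= a)%N -> (a <= n)%N -> 0 < bv n Y a.
Proof.
move=> n2 HY a2 an; have pY : 0 < Y a a.-1 by apply: HY; lia.
rewrite /bv; case: ifP => _ //.
apply: divr_gt0 => //; apply: mulr_gt0; apply: getc_pos => //.
  case: (a =P n) => [->|na]; first by apply/orP; left; apply/orP; right; rewrite !eqxx.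
  by apply/orP; right; apply/and3P; split; lia.
case: (a =P 2%N) => [->|na] //.
by apply/orP; right; apply/and3P; split; lia.
Qed.


Lemma Rmap_pos (R : realFieldType) n (X : tarray R) : (3 <= n)%N -> posR n X ->
  posR n (Rmap n X).
Proof.
move=> n3 HX; have posZ : posR n (Zf n X (n - 2)) by apply: Zf_pos => //; lia.
have posY := rmap_pos (ltnW n3) posZ.
move=> a b b0 ba an; rewrite /Rmap rho_last_eq; last lia.
case: ifP => [/and3P[a2 _ _]|_]; last exact: posY.
apply: bv_pos => //; lia.
Qed.

Lemma Rmap_D (R : realFieldType) n (X : tarray R) j : (3 <= n)%N -> posR n X ->
  (j <= n - 2)%N ->
  Dnj n j (Rmap n X) = (\prod_(1 <= l < j.+1) X n l) * Dnj n.-1 j X.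
Proof.
move=> n3 HX jn; rewrite -(Zf_D HX (k := (n - 2)%N)) //; last lia.
apply: Dnj_frame; first lia.
move=> b b0 bj; rewrite /Rmap rho_last_eq; last lia.
case: ifP => [/and3P[_ _ /eqP]|_]; first lia.
rewrite /rmap /upd; case: ifP => // /andP[/eqP ? /eqP ?]; lia.
Qed.

Fixpoint altg (R : realFieldType) (g : nat -> R) (m : nat) : R :=
  match m with 0 => 1 | m'.+1 => if m' == 0%N then 1 else g m'.+1 / altg g m' end.

Lemma altg_pos (R : realFieldType) (g : nat -> R) m :
  (forall r, (2 <= r <= m)%N -> 0 < g r) -> 0 < altg g m.
Proof.
elim: m => [//|m IH] H /=; case: ifP => // m0.
apply: divr_gt0; [apply: H; lia | apply: IH => r Hr; apply: H; lia].
Qed.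

Lemma altg_ext (R : realFieldType) (g h : nat -> R) m :
  (forall r, (r <= m)%N -> g r = h r) -> altg g m = altg h m.
Proof.
elim: m => [//|m IH] H /=; case: ifP => // _.
rewrite H // IH // => r Hr; apply: H; lia.
Qed.

Lemma prod_pos_nat (R : realFieldType) (F : nat -> R) m k :
  (forall r, (m <= r < k)%N -> 0 < F r) -> 0 < \prod_(m <= r < k) F r.
Proof.
move=> H; rewrite big_nat_cond; apply: prodr_gt0 => r /andP[h _]; exact: H.
Qed.

Lemma pzS (R : realFieldType) (z : nat -> R) a : z 2%N = 1 -> (1 <= a)%N ->
  \prod_(3 <= r < a.+2) z r = \prod_(3 <= r < a.+1) z r * z a.+1.
Proof.
move=> z2 a1; case: (a =P 1%N) => [->|a1'].
  by rewrite !big_geq // z2 mulr1.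
by rewrite big_nat_recr //=; lia.
Qed.

Lemma chain (R : realFieldType) (f x z : nat -> R) n :
  (forall a, (2 <= a < n)%N -> f a = if odd (n - a)%N then x a else z a.+1 * z a / x a) ->
  z 2%N = 1 ->
  (forall a, (2 <= a < n)%N -> 0 < x a) -> (forall a, (2 <= a <= n)%N -> 0 < z a) ->
  forall a, (1 <= a < n)%N ->
  (odd (n - a)%N ->
     \prod_(2 <= r < a.+1) f r = \prod_(3 <= r < a.+1) z r * altg x a /\
     altg f a = \prod_(2 <= r < a.+1) x r / \prod_(3 <= r < a.+1) z r) /\
  (~~ odd (n - a)%N ->
     \prod_(2 <= r < a.+1) f r = \prod_(3 <= r < a.+2) z r / altg x a /\
     altg f a = \prod_(3 <= r < a.+2) z r / \prod_(2 <= r < a.+1) x r).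
Proof.
move=> Hf z2 Hx Hz; elim => [//|a IH] Ha.
case: (a =P 0%N) => [->|a0].
  rewrite !big_geq //= divr1 mulr1.
  by split => _; split.
have [IHo IHe] := IH ltac:(lia).
have e : (n - a = (n - a.+1).+1)%N by lia.
rewrite e /= in IHo IHe.
have pxa : 0 < altg x a by apply: altg_pos => r Hr; apply: Hx; lia.
have pXa : 0 < \prod_(2 <= r < a.+1) x r by apply: prod_pos_nat => r Hr; apply: Hx; lia.
have pZa : 0 < \prod_(3 <= r < a.+1) z r by apply: prod_pos_nat => r Hr; apply: Hz; lia.
have pz1 : 0 < z a.+1 by apply: Hz; lia.
have px1 : 0 < x a.+1 by apply: Hx; lia.
have pz2 : 0 < z a.+2 by apply: Hz; lia.
have afa : altg f a.+1 = f a.+1 / altg f a by rewrite /=; case: eqP => //; lia.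
have axa : altg x a.+1 = x a.+1 / altg x a by rewrite /=; case: eqP => //; lia.
rewrite afa axa.
rewrite big_nat_recr /=; last lia.
rewrite [\prod_(2 <= r < a.+2) x r]big_nat_recr /=; last lia.
rewrite (Hf a.+1); last lia.
rewrite (@pzS R z a.+1) // (@pzS R z a) //; try lia.
rewrite (@pzS R z a) // in IHe; try lia.
move: pxa pXa pZa pz1 px1 pz2 IHo IHe.
set ax := altg x a; set af := altg f a; set PX := \prod_(2 <= r < a.+1) x r;
  set PZ := \prod_(3 <= r < a.+1) z r; set PF := \prod_(2 <= r < a.+1) f r.
move=> pxa pXa pZa pz1 px1 pz2 IHo IHe.
have ax0 : ax != 0 by rewrite gt_eqF.
have PX0 : PX != 0 by rewrite gt_eqF.
have PZ0 : PZ != 0 by rewrite gt_eqF.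
have z10 : z a.+1 != 0 by rewrite gt_eqF.
have z20 : z a.+2 != 0 by rewrite gt_eqF.
have x10 : x a.+1 != 0 by rewrite gt_eqF.
split => hp.
  rewrite hp; have [-> ->] := IHe ltac:(by rewrite hp).
  split; field; by rewrite ?ax0 ?PX0 ?PZ0 ?z10 ?z20 ?x10.
rewrite (negbTE hp); have [-> ->] := IHo hp.
split; field; by rewrite ?ax0 ?PX0 ?PZ0 ?z10 ?z20 ?x10.
Qed.

Lemma Dnj_diag1 (R : realFieldType) (Y : tarray R) a :
  Dnj a.+1 a Y = \prod_(2 <= r < a.+2) Y r r.-1.
Proof.
elim: a => [|a IH]; first by rewrite Dnj0 big_geq.
by rewrite DnjS /= IH [in RHS]big_nat_recr //= mulrC.
Qed.

Lemma Dnj_diag2 (R : realFieldType) (Y : tarray R) a :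
  Dnj a.+2 a Y = \prod_(3 <= r < a.+3) Y r (r - 2)%N.
Proof.
elim: a => [|a IH]; first by rewrite Dnj0 big_geq.
rewrite DnjS /= IH [in RHS]big_nat_recr //= mulrC.
by have -> : (a.+3 - 2 = a.+1)%N by lia.
Qed.

Lemma getc_rmap (R : realFieldType) n (Z : tarray R) i j : ~ (i = n /\ j = n.-1) ->
  getc n (rmap n Z) i j = getc n Z i j.
Proof.
move=> H; rewrite /getc /rmap /upd; case: ifP => // _; case: ifP => // _.
by case: (i =P n) => [?|] //; case: (j =P n.-1) => [?|] //; exfalso; apply: H.
Qed.

Lemma Rmap_last (R : realFieldType) m (X : tarray R) : posR m.+3 X ->
  tau m.+3 m.+2 (Rmap m.+3 X) = X m.+3 m.+2 * altg (fun r => X r r.-1) m.+2 /\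
  altg (fun r => Rmap m.+3 X r r.-1) m.+3 = \prod_(1 <= l < m.+3) X m.+3 l.
Proof.
move=> HX; set n := m.+3.
set Z := Zf n X (n - 2).
have posZ : posR n Z by apply: Zf_pos => //; lia.
set Y0 := rmap n Z.
have FE : forall a b, Rmap n X a b = rho_last n Z a b by [].
set f := fun r => Rmap n X r r.-1.
set x := fun r => X r r.-1.
set z := fun r => getc n Z r (r - 2)%N.
have Zx : forall a, (1 <= a)%N -> Z a a.-1 = X a a.-1.
  by move=> a a1; apply: Zf_frame; lia.
have Y0x : forall a, (1 <= a)%N -> (a < n)%N -> Y0 a a.-1 = X a a.-1.
  move=> a a1 an; rewrite /Y0 /rmap /upd; case: ifP => [/andP[/eqP ? _]|_]; first lia.
  exact: Zx.
have Hf : forall a, (2 <= a < n)%N -> f a = if odd (n - a)%N then x a else z a.+1 * z a / x a.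
  move=> a /andP[a2 an]; rewrite /f FE rho_last_eq ?a2 ?eqxx /=; last lia.
  rewrite (ltnW an) /= /bv /x -/Y0 Y0x //; try lia.
  case: ifP => // _; rewrite /z !getc_rmap; try lia.
  by have -> : (a.+1 - 2 = a.-1)%N by lia.
have z2 : z 2%N = 1 by [].
have Hx : forall a, (2 <= a < n)%N -> 0 < x a by move=> a Ha; apply: HX; lia.
have Hz : forall a, (2 <= a <= n)%N -> 0 < z a.
  move=> a Ha; apply: getc_pos => //.
  case: (a =P 2%N) => [->|a2] //.
  by apply/orP; right; apply/and3P; split; lia.
have [Co0 _] := @chain R f x z n Hf z2 Hx Hz n.-1 ltac:(lia).
have e1 : (n - n.-1 = 1)%N by lia.
rewrite e1 in Co0; have [Co Ca] := Co0 isT; clear Co0.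
have fn : f n = z n * X n n.-1.
  have g1 : getc n (rmap n Z) n.+1 n.-1 = 1 by rewrite /getc /n /= !eqxx.
  have g2 : getc n (rmap n Z) n (n - 2)%N = z n by rewrite getc_rmap //; lia.
  have g3 : rmap n Z n n.-1 = (X n n.-1)^-1 by rewrite /rmap /upd !eqxx /= Zx.
  change (Rmap n X n n.-1 = z n * X n n.-1); rewrite FE rho_last_eq; last lia.
  have n1 : (1 < n)%N by [].
  by rewrite leqnn eqxx n1 /= /bv subnn /= g1 g2 g3 invrK mul1r.
have zZ : forall r, (3 <= r <= n)%N -> z r = Z r (r - 2)%N.
  move=> r Hr; rewrite /z /getc; case: ifP => [/eqP|_]; first lia.
  by case: ifP => // /andP[/eqP ? _]; lia.
have pzn : \prod_(3 <= r < n.+1) z r = Dnj n (n - 2)%N Z.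
  rewrite /n /= Dnj_diag2; apply: eq_big_nat => r Hr; exact: zZ.
have D2 : Dnj n (n - 2)%N (Rmap n X) = \prod_(3 <= r < n.+1) z r.
  rewrite /n /= Dnj_diag2; apply: eq_big_nat => r Hr.
  rewrite zZ // FE rho_last_eq; last lia.
  case: ifP => [/and3P[_ _ /eqP]|_]; first lia.
  rewrite /Y0 /rmap /upd; case: ifP => // /andP[_ /eqP]; lia.
have D1 : Dnj n n.-1 (Rmap n X) = \prod_(2 <= r < n.+1) f r by rewrite /n /= Dnj_diag1.
have pzS' : \prod_(3 <= r < n.+1) z r = \prod_(3 <= r < n) z r * z n.
  by rewrite /n big_nat_recr.
have pxn : 0 < \prod_(2 <= r < n) x r.
  by apply: prod_pos_nat => r Hr; apply: Hx; lia.
have pzn1 : 0 < \prod_(3 <= r < n) z r.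
  by apply: prod_pos_nat => r Hr; apply: Hz; lia.
have pzz : 0 < z n by apply: Hz; lia.
have pxx : 0 < X n n.-1 by apply: HX; lia.
have pax : 0 < altg x n.-1 by apply: altg_pos => r Hr; apply: Hx; lia.
have Zd : Dnj n (n - 2)%N Z = \prod_(1 <= l < (n - 2).+1) X n l * Dnj n.-1 (n - 2)%N X.
  by apply: Zf_D => //; lia.
have xd : \prod_(2 <= r < n) x r = Dnj n.-1 (n - 2)%N X by rewrite /n /= Dnj_diag1.
split.
  change (Dnj n n.-1 (Rmap n X) / Dnj n (n - 2)%N (Rmap n X) = X n n.-1 * altg x n.-1).
  rewrite D1 D2 pzS'.
  move: pzn1 pzz pax Co; set A := \prod_(3 <= r < n) z r; set B := z n; set C := altg x n.-1.
  move=> pA pB pC Co.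
  rewrite big_nat_recr //= fn Co.
  rewrite -/B; change (X n m.+2) with (X n n.-1).
  field; by rewrite !gt_eqF.
have key : \prod_(3 <= r < n) z r * z n =
    \prod_(1 <= l < (n - 2).+1) X n l * \prod_(2 <= r < n) x r.
  by rewrite -pzS' pzn Zd xd.
change (f n / altg f n.-1 = \prod_(1 <= l < n) X n l).
have e : n.-1.+1 = n by [].
rewrite Ca fn e.
have e2 : n = (n - 2).+2 by [].
move: key pxn pzn1 pzz pxx.
set A := \prod_(3 <= r < n) z r; set PX := \prod_(2 <= r < n) x r;
  set Q := \prod_(1 <= l < (n - 2).+1) X n l.
move=> key pX pA pB pC.
rewrite [in RHS]e2 [in RHS]big_nat_recr //= -/Q.
have -> : X (n - 2).+2 (n - 2).+1 = X n n.-1 by [].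
have -> : z n = Q * PX / A by rewrite -key mulrC mulKf // gt_eqF.
field; by rewrite !gt_eqF.
Qed.

Lemma mainH (R : realFieldType) N (W : tarray R) : posR N W -> forall k, (k.+2 <= N)%N ->
  (forall j, (1 <= j)%N -> (j <= k.+1)%N -> tau k.+2 j (Tmap k.+2 W) =
      (\prod_(1 <= l < j) W j l) * (\prod_(j.+1 <= i < k.+3) W i j)) /\
  altg (fun r => Tmap k.+2 W r r.-1) k.+2 = \prod_(1 <= l < k.+2) W k.+2 l /\
  posR k.+2 (Tmap k.+2 W).
Proof.
move=> HW; elim=> [|k IH] kN.
  split; last split.
  - move=> j j1 j2; have -> : j = 1%N by lia.
    by rewrite /tau /= DnjS !Dnj0 /= big_geq // big_nat1 mul1r !mulr1 divr1.
  - by rewrite /= big_nat1 divr1.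
  - by move=> a b b0 ba a2; apply: HW; lia.
have [IHa [IHb IHc]] := IH ltac:(lia).
set T' := Tmap k.+2 W.
set X := fun i j => if (i < k.+3)%N then T' i j else W i j.
have TE : Tmap k.+3 W = Rmap k.+3 X by [].
have Xlo : forall a b, (a < k.+3)%N -> X a b = T' a b by move=> a b h; rewrite /X h.
have Xhi : forall b, X k.+3 b = W k.+3 b by move=> b; rewrite /X ltnn.
have posX : posR k.+3 X.
  move=> a b b0 ba an; case: (ltnP a k.+3) => h.
    by rewrite Xlo //; apply: IHc => //; lia.
  have -> : a = k.+3 by lia.
  by rewrite Xhi; apply: HW; lia.
have [L1 L2] := Rmap_last posX.
rewrite TE; split; last split.
- move=> j j1 j2; case: (j =P k.+2) => [->|jk].
    rewrite L1 Xhi (@altg_ext R _ (fun r => T' r r.-1)); last first.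
      by move=> r Hr; rewrite Xlo //; lia.
    by rewrite IHb big_nat1 mulrC.
  have jk1 : (j <= k.+1)%N by lia.
  have DX : forall j', (j' <= k.+2)%N -> Dnj k.+2 j' X = Dnj k.+2 j' T'.
    move=> j' hj; apply: eq_bigr => i _; rewrite Xlo //; lia.
  rewrite /tau (@Rmap_D R k.+3 X j) //; try lia.
  rewrite (@Rmap_D R k.+3 X j.-1) //; try lia.
  case: j j1 jk jk1 {j2} => [//|j] _ jk jk1.
  rewrite big_nat_recr //= !DX; try lia.
  have IHj := IHa j.+1 isT jk1.
  rewrite /tau in IHj.
  have pP : 0 < \prod_(1 <= l < j.+1) X k.+3 l.
    by apply: prod_pos_nat => r Hr; apply: posX; lia.
  have pD : 0 < Dnj k.+2 j T' by apply: (Dnj_pos IHc); lia.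
  rewrite Xhi [\prod_(j.+2 <= i < k.+4) _]big_nat_recr /=; last lia.
  rewrite mulrA -IHj.
  move: pP pD; set P := \prod_(1 <= l < j.+1) X k.+3 l; set D0 := Dnj k.+2 j T'.
  move=> pP pD.
  field; by rewrite !gt_eqF.
- rewrite L2; apply: eq_bigr => l _; exact: Xhi.
- exact: Rmap_pos.
Qed.

Theorem proposition6p5 (R : realFieldType) (n : nat) (W : tarray R) :
  (2 <= n)%N ->
  (forall i j : nat, (1 <= j)%N -> (j < i)%N -> (i <= n)%N -> 0 < W i j) ->
  forall j : nat, (1 <= j)%N -> (j <= n.-1)%N ->
    tau n j (Tmap n W) =
      (\prod_(1 <= l < j) W j l) * (\prod_(j.+1 <= k < n.+1) W k j).
Proof.
move=> n2 HW j j1 jn.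
have posW : posR n W by move=> a b b0 ba an; apply: HW.
case: n n2 HW posW jn => [|[|k]] // _ _ posW jn.
have [Ha _] := mainH posW (k := k) (leqnn _).
exact: Ha.
Qed.
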